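(* Let $(S,1\cdots1)$ be a tree pattern with all edges contiguous, and let $x$ be a vertex of $S$ that has no right child, such that for every edge $(u,v)$ of $S$ with $v$ the right child of $u$, either $v$ is a leaf or $x$ lies in the subtree $S(v)$. Let $(P,e)$ and $(P',e')$ be tree patterns with $P,P'\in\mathcal{T}_k$, and let $Q$ and $Q'$ be the tree patterns obtained from $(S,1\cdots1)$ by attaching $(P,e)$, respectively $(P',e')$, as the right subtree of $x$ via a non-contiguous edge (all other edge types unchanged). If $(P,e)$ and $(P',e')$ are Wilf-equivalent, then $Q$ and $Q'$ are Wilf-equivalent.
   Context: $\mathcal{T}_n$ is the set of binary trees on $n$ vertices labeled $1,\dots,n$ by the search tree property (after attaching subtrees, vertex labels are reassigned according to this property). $c_L,c_R,p$: left child, right child, parent. A tree pattern is $(P,e)$, $P\in\mathcal{T}_k$, $e\colon[k]\setminus\{\text{root}\}\to\{0,1\}$; the edge $(i,p(i))$ is contiguous if $e(i)=1$ and non-contiguous if $e(i)=0$. $T\in\mathcal{T}_n$ contains $(P,e)$ if there is an injection $f\colon[k]\to[n]$ such that for every non-root $i$ of $P$: if $e(i)=1$, $f(i)$ is the left (resp. right) child of $f(p(i))$ when $i$ is the left (resp. right) child of $p(i)$; if $e(i)=0$, $f(i)$ lies in the left (resp. right) subtree of $f(p(i))$. $\mathcal{T}_n(P,e)$ is the set of avoiders. Two tree patterns $Q,Q'$ are Wilf-equivalent if $|\mathcal{T}_n(Q)|=|\mathcal{T}_n(Q')|$ for all $n\ge0$. *)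

(* Defs.v *)
From Stdlib Require Import ClassicalDescription.
From mathcomp Require Import all_boot.

Set Implicit Arguments.
Unset Strict Implicit.
Unset Printing Implicit Defensive.

(* ---------- Binary trees (elements of T_n) ----------
   A binary tree on n vertices; its vertex labels 1..n are determined by the
   search-tree (in-order) property, so we identify a vertex with its path from
   the root: a sequence of directions (false = left, true = right). *)
Inductive btree := Leaf | Node of btree & btree.

Fixpoint bsize (T : btree) : nat :=
  match T with Leaf => 0 | Node l r => (bsize l + bsize r).+1 end.

Fixpoint tvert (T : btree) (p : seq bool) : bool :=
  match T, p with
  | Leaf, _ => false
  | Node _ _, [::] => true
  | Node l r, d :: p' => tvert (if d then r else l) p'
  end.

(* Enumeration of T_n: all binary trees with n vertices
   (fuel f >= n guarantees termination). *)
Fixpoint trees_f (f n : nat) : seq btree :=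
  match n with
  | 0 => [:: Leaf]
  | n'.+1 =>
      match f with
      | 0 => [::]
      | f'.+1 =>
          flatten [seq [seq Node l r | l <- trees_f f' i, r <- trees_f f' (n' - i)]
                  | i <- iota 0 n]
      end
  end.

Definition trees (n : nat) : seq btree := trees_f n n.

(* ---------- Tree patterns (P, e) ----------
   A pattern is a nonempty binary tree; each existing child carries the type
   of the edge joining it to its parent: true = contiguous (e = 1),
   false = non-contiguous (e = 0). *)
Inductive pat := PNode of option (bool * pat) & option (bool * pat).

Definition child (d : bool) (P : pat) : option (bool * pat) :=
  let: PNode l r := P in if d then r else l.

Fixpoint psize (P : pat) : nat :=
  let: PNode l r := P in
  (match l with Some (_, Q) => psize Q | None => 0 end +
   match r with Some (_, Q) => psize Q | None => 0 end).+1.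

Fixpoint psub (P : pat) (v : seq bool) : option pat :=
  match v with
  | [::] => Some P
  | d :: v' => match child d P with
               | Some (_, Q) => psub Q v'
               | None => None
               end
  end.

Definition pvert (P : pat) (v : seq bool) : Prop := psub P v <> None.

Definition contains (T : btree) (P : pat) : Prop :=
  exists f : seq bool -> seq bool,
    (forall v, pvert P v -> tvert T (f v)) /\
    (forall u v, pvert P u -> pvert P v -> f u = f v -> u = v) /\
    (forall v d c R Q, psub P v = Some R -> child d R = Some (c, Q) ->
       if c then f (rcons v d) = rcons (f v) d
       else exists s, f (rcons v d) = f v ++ d :: s).

Definition containsb (T : btree) (P : pat) : bool :=
  if excluded_middle_informative (contains T P) then true else false.

Definition num_avoiders (P : pat) (n : nat) : nat :=
  count (fun T => ~~ containsb T P) (trees n).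

Definition wilf_equiv (P P' : pat) : Prop :=
  forall n, num_avoiders P n = num_avoiders P' n.

Definition all_contiguous (S : pat) : Prop :=
  forall v d c R Q, psub S v = Some R -> child d R = Some (c, Q) -> c = true.

Fixpoint graft (S : pat) (x : seq bool) (o : option (bool * pat)) : pat :=
  match x with
  | [::] => let: PNode l _ := S in PNode l o
  | d :: x' =>
      let: PNode l r := S in
      let g := omap (fun cq : bool * pat => (cq.1, graft cq.2 x' o)) in
      if d then PNode l (g r) else PNode (g l) r
  end.

Definition attach_right_nc (S : pat) (x : seq bool) (P : pat) : pat :=
  graft S x (Some (false, P)).

(* Main.v *)
Require Import Defs.
From HB Require Import structures.
From Stdlib Require Import ClassicalDescription.
From mathcomp Require Import all_boot.
Set Implicit Arguments. Unset Strict Implicit. Unset Printing Implicit Defensive.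

Fixpoint beq (a b : btree) : bool :=
  match a, b with
  | Leaf, Leaf => true
  | Node l r, Node l' r' => beq l l' && beq r r'
  | _, _ => false
  end.
Lemma beqP : Equality.axiom beq.
Proof.
elim=> [|l IHl r IHr] [|l' r'] /=; try by constructor.
by apply: (iffP andP) => [[/IHl-> /IHr->]|[<- <-]]; split; [apply/IHl|apply/IHr].
Qed.
HB.instance Definition _ := hasDecEq.Build btree beqP.

Definition lsz (T : btree) := if T is Node l _ then bsize l else 0.

Lemma uniq_flat (F : nat -> seq btree) (s : seq nat) :
  uniq s -> (forall i, i \in s -> uniq (F i)) -> (forall i T, i \in s -> T \in F i -> lsz T = i) ->
  uniq (flatten (map F s)).
Proof.
elim: s => //= a s IH /andP[an us] UF HF.
rewrite cat_uniq UF ?inE ?eqxx // IH //; first last.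
- by move=> i T Hi; apply: HF; rewrite inE Hi orbT.
- by move=> i Hi; apply: UF; rewrite inE Hi orbT.
rewrite /= andbT; apply/hasPn => T /flatten_mapP[i ins TF]; apply/negP => TA.
move: an; rewrite -(HF a T _ TA) ?inE ?eqxx // (HF i T _ TF) ?inE ?ins ?orbT //.
Qed.

Lemma trees_f_S f n : trees_f f.+1 n.+1 =
  flatten [seq [seq Node l r | l <- trees_f f i, r <- trees_f f (n - i)] | i <- iota 0 n.+1].
Proof. by []. Qed.

Lemma trees_f_spec f n : n <= f ->
  uniq (trees_f f n) /\ forall T, (T \in trees_f f n) = (bsize T == n).
Proof.
elim: f n => [|f IH] [|n] Hn.
- by split => // -[|l r].
- by [].
- by split => // -[|l r].
- rewrite trees_f_S.
  have IHi : forall i, i <= n -> uniq (trees_f f i) /\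
     forall T, (T \in trees_f f i) = (bsize T == i).
    by move=> i Hi; apply: IH; apply: leq_trans Hi _.
  split.
  + apply: uniq_flat; first exact: iota_uniq.
    * move=> i; rewrite mem_iota add0n ltnS => /andP[_ Hi].
      apply: allpairs_uniq.
      - by case: (IHi i Hi).
      - by case: (IHi (n - i) (leq_subr _ _)).
      - by move=> [a b] [c d] _ _; rewrite /uncurry /= => -[-> ->].
    * move=> i T; rewrite mem_iota add0n ltnS => /andP[_ Hi] /allpairsP[[a b] /= [Ha _ ->]].
      by move: Ha; rewrite (proj2 (IHi i Hi)) => /eqP.
  + move=> T; apply/flatten_mapP/eqP.
    * move=> [i]; rewrite mem_iota add0n ltnS => /andP[_ Hi] /allpairsP[[a b] /= [Ha Hb ->]].
      move: Ha Hb; rewrite (proj2 (IHi i Hi)) (proj2 (IHi (n - i) (leq_subr _ _))).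
      by move=> /eqP Ha /eqP Hb /=; rewrite Ha Hb subnKC.
    * case: T => [|l r] // [Hs].
      exists (bsize l); first by rewrite mem_iota add0n ltnS /= -Hs leq_addr.
      have Hl : bsize l <= n by rewrite -Hs leq_addr.
      apply/allpairsP; exists (l, r) => /=; split => //.
      - by rewrite (proj2 (IHi _ Hl)).
      - by rewrite (proj2 (IHi _ (leq_subr _ _))) -Hs addKn.
Qed.

Lemma trees_spec n : uniq (trees n) /\ forall T, (T \in trees n) = (bsize T == n).
Proof. exact: trees_f_spec. Qed.

Definition lstC P n := [seq T <- trees n | containsb T P].
Definition lstA P n := [seq T <- trees n | ~~ containsb T P].

Definition phi P P' (T : btree) : btree :=
  let n := bsize T in
  if containsb T P then nth Leaf (lstC P' n) (index T (lstC P n))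
  else nth Leaf (lstA P' n) (index T (lstA P n)).

Lemma size_lstA P n : size (lstA P n) = num_avoiders P n.
Proof. by rewrite size_filter. Qed.

Lemma size_lstC P n : size (lstC P n) = size (trees n) - num_avoiders P n.
Proof.
rewrite size_filter /num_avoiders -(count_predC (fun T => containsb T P)).
by rewrite addnK.
Qed.

Lemma phi_spec P P' : wilf_equiv P P' -> forall T,
  [/\ bsize (phi P P' T) = bsize T, containsb (phi P P' T) P' = containsb T P
    & phi P' P (phi P P' T) = T].
Proof.
move=> W T; set n := bsize T.
have [Tu Tm] := trees_spec n.
have Tin : T \in trees n by rewrite Tm.
rewrite /phi -/n; case: ifP => HC.
- have Hin : T \in lstC P n by rewrite mem_filter HC.
  have Hi : index T (lstC P n) < size (lstC P' n).
    by rewrite size_lstC -W -size_lstC index_mem.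
  have := mem_nth Leaf Hi; rewrite mem_filter => /andP[HC' Hm].
  move: (Hm); rewrite Tm => /eqP Hs.
  rewrite Hs HC'; split => //.
  rewrite index_uniq ?nth_index //; last by apply: filter_uniq.
- have Hin : T \in lstA P n by rewrite mem_filter HC.
  have Hi : index T (lstA P n) < size (lstA P' n).
    by rewrite size_lstA -W -size_lstA index_mem.
  have := mem_nth Leaf Hi; rewrite mem_filter => /andP[HC' Hm].
  move: (Hm); rewrite Tm => /eqP Hs.
  move: HC'; rewrite Hs; case: ifP => // HC' _; split => //.
  rewrite index_uniq ?nth_index //; last by apply: filter_uniq.
Qed.

Definition etype (P : pat) (v : seq bool) (d : bool) : option bool :=
  match psub P v with Some R => omap fst (child d R) | None => None end.

Definition edge (f : seq bool -> seq bool) v d (c : bool) : Prop :=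
  if c then f (rcons v d) = rcons (f v) d
  else exists s, f (rcons v d) = f v ++ d :: s.

Lemma psub_nil P : psub P [::] = Some P.
Proof. by case: P. Qed.

Lemma psub_cons P d v : psub P (d :: v) =
  match child d P with Some (_, Q) => psub Q v | None => None end.
Proof. by case: P. Qed.

Lemma psub_rcons P v d :
  psub P (rcons v d) = obind (fun R => omap snd (child d R)) (psub P v).
Proof.
elim: v P => [|b v IH] P.
- by rewrite /= psub_cons psub_nil /=; case: (child d P) => [[? ?]|]; rewrite ?psub_nil.
- by rewrite rcons_cons !psub_cons; case: (child b P) => [[? ?]|].
Qed.

Lemma psub_cat P u w : psub P (u ++ w) = obind (fun R => psub R w) (psub P u).
Proof.
elim: u P => [|b u IH] P; first by rewrite psub_nil.
by rewrite cat_cons !psub_cons; case: (child b P) => [[? ?]|].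
Qed.

Lemma pvert_rcons P v d : pvert P (rcons v d) <-> etype P v d <> None.
Proof.
rewrite /pvert /etype psub_rcons; case: (psub P v) => //= R.
by case: (child d R) => [[]|].
Qed.

Lemma pvert_nil P : pvert P [::].
Proof. by rewrite /pvert psub_nil. Qed.

Lemma pvert_cat P u w : pvert P (u ++ w) -> pvert P u.
Proof. by rewrite /pvert psub_cat; case: (psub P u). Qed.

Lemma pvert_rconsl P v d : pvert P (rcons v d) -> pvert P v.
Proof. by rewrite -cats1; apply: pvert_cat. Qed.

Lemma etype_vert P v d c : etype P v d = Some c -> pvert P v.
Proof. by rewrite /etype /pvert; case: (psub P v). Qed.

Lemma contains_iff T P : contains T P <->
  exists f : seq bool -> seq bool,
    (forall v, pvert P v -> tvert T (f v)) /\
    (forall u v, pvert P u -> pvert P v -> f u = f v -> u = v) /\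
    (forall v d c, etype P v d = Some c -> edge f v d c).
Proof.
split=> -[f [H1 [H2 H3]]]; exists f; do 2!split => //.
- move=> v d c; rewrite /etype; case E: (psub P v) => [R|] //.
  case E2: (child d R) => [[c' Q]|] //= [<-].
  exact: (H3 _ _ _ _ _ E E2).
- move=> v d c R Q E E2; have := H3 v d c; rewrite /etype E E2 /=.
  by move=> /(_ erefl).
Qed.

Lemma contig_etype S : all_contiguous S -> forall v d c, etype S v d = Some c -> c = true.
Proof.
move=> H v d c; rewrite /etype; case E: (psub S v) => [R|] //.
case E2: (child d R) => [[c' Q]|] //= [<-]; exact: H E E2.
Qed.

Lemma etype_cons P b v d : etype P (b :: v) d =
  match child b P with Some (_, Q) => etype Q v d | None => None end.
Proof. by rewrite /etype psub_cons; case: (child b P) => [[]|]. Qed.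

Lemma graft_nopre S x o v d : ~~ prefix x v -> etype (graft S x o) v d = etype S v d.
Proof.
elim: x S v => [|b x IH] [l r] v; first by rewrite prefix0s.
case: v => [|b' v] H.
- rewrite /etype !psub_nil /=.
  by clear H IH; case: b; case: d => //=; [case: r => [[? ?]|]|case: l => [[? ?]|]].
- move: H; rewrite !etype_cons prefix_cons /=.
  case: b; case: b' => //= H.
  + by case: r => [[c R]|] //=; apply: IH.
  + by case: l => [[c R]|] //=; apply: IH.
Qed.

Lemma psub_graft S x o w :
  psub (graft S x o) (x ++ w) = obind (fun X => psub (graft X [::] o) w) (psub S x).
Proof.
elim: x S => [|b x IH] [l r] //=.
rewrite psub_cons.
case: b => /=.
- by case: r => [[c R]|] //=.
- by case: l => [[c R]|] //=.
Qed.

Lemma rcons_catx (x w : seq bool) b : rcons x b ++ w = x ++ b :: w.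
Proof. by rewrite -cats1 -catA. Qed.

Lemma prefix_rcons_split (a v : seq bool) d :
  prefix a (rcons v d) -> prefix a v \/ a = rcons v d.
Proof.
move=> /prefixP[m]; case/lastP: m => [|m e]; first by rewrite cats0 => ->; right.
rewrite -rcons_cat => /eqP; rewrite eqseq_rcons => /andP[/eqP -> _].
by left; apply: prefix_prefix.
Qed.


Lemma noSright S x X v : psub S x = Some X -> child true X = None ->
  pvert S v -> ~~ prefix (rcons x true) v.
Proof.
move=> HS HX Hv; apply/negP => /prefixP[w Ev]; move: Hv; rewrite Ev => /pvert_cat.
by rewrite pvert_rcons /etype HS HX.
Qed.

Lemma Q1 S x X P w d : psub S x = Some X -> child true X = None ->
  etype (attach_right_nc S x P) (x ++ true :: w) d = etype P w d.
Proof.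
move=> HS HX; rewrite /etype /attach_right_nc psub_graft HS /=.
by case: X HS HX => l r HS HX; rewrite psub_cons.
Qed.

Lemma Q2 S x X P : psub S x = Some X -> child true X = None ->
  etype (attach_right_nc S x P) x true = Some false.
Proof.
move=> HS HX; rewrite /etype /attach_right_nc -[x in psub _ x]cats0 psub_graft HS /=.
by case: X HS HX => l r HS HX; rewrite psub_nil.
Qed.

Lemma Q3 S x X P v d : psub S x = Some X -> child true X = None ->
  ~~ prefix (rcons x true) (rcons v d) ->
  etype (attach_right_nc S x P) v d = etype S v d.
Proof.
move=> HS HX Hp; case Hx: (prefix x v); last by apply: graft_nopre; rewrite Hx.
move/prefixP: Hx => [w Ev]; subst v.
rewrite /etype /attach_right_nc psub_graft psub_cat HS /=.
case: X HS HX => l r HS HX /=; rewrite /= in HX; subst r.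
case: w Hp => [|[] w] Hp.
- case: d Hp; first by rewrite cats0 prefix_refl.
  by [].
- by move: Hp; rewrite rcons_cat rcons_cons -rcons_catx prefix_prefix.
- by [].
Qed.

Lemma Q4 S x X P v : psub S x = Some X -> child true X = None ->
  ~~ prefix (rcons x true) v ->
  (pvert (attach_right_nc S x P) v <-> pvert S v).
Proof.
move=> HS HX; case/lastP: v => [|v d] Hp; first by split=> _; apply: pvert_nil.
rewrite !pvert_rcons (@Q3 S x X P _ _ HS HX) //.
Qed.

Lemma Q5 S x X P w : psub S x = Some X -> child true X = None ->
  (pvert (attach_right_nc S x P) (x ++ true :: w) <-> pvert P w).
Proof.
move=> HS HX; case/lastP: w => [|w d].
- by rewrite cats1 pvert_rcons (@Q2 S x X P HS HX); split=> // _; apply: pvert_nil.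
- by rewrite -rcons_cons -rcons_cat !pvert_rcons (@Q1 S x X P _ _ HS HX).
Qed.

Lemma Qcases S x X P v : psub S x = Some X -> child true X = None ->
  pvert (attach_right_nc S x P) v ->
  (pvert S v /\ ~~ prefix (rcons x true) v) \/
  exists w, v = x ++ true :: w /\ pvert P w.
Proof.
move=> HS HX; case Hp: (prefix (rcons x true) v).
- move/prefixP: Hp => [w ->]; rewrite rcons_catx (@Q5 S x X P _ HS HX) => H.
  by right; exists w.
- by rewrite (@Q4 S x X P _ HS HX) ?Hp // => H; left.
Qed.

Fixpoint tsub (T : btree) (p : seq bool) {struct p} : btree :=
  match p with
  | [::] => T
  | d :: p' => match T with Leaf => Leaf | Node l r => tsub (if d then r else l) p' end
  end.

Definition tchild (d : bool) (U : btree) : btree :=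
  match U with Leaf => Leaf | Node l r => if d then r else l end.

Lemma tsub_leaf p : tsub Leaf p = Leaf.
Proof. by case: p. Qed.

Lemma tvert_leaf p : tvert Leaf p = false.
Proof. by case: p. Qed.

Lemma tvert_tsub T p w : tvert (tsub T p) w = tvert T (p ++ w).
Proof.
elim: p T => [|d p IH] [|l r] //=; rewrite ?tvert_leaf //.
Qed.

Lemma tsub_cat T p q : tsub T (p ++ q) = tsub (tsub T p) q.
Proof.
elim: p T => [|d p IH] T; first by [].
case: T => [|l r]; first by clear IH; case: q.
by rewrite /= IH.
Qed.

Lemma tsub_rcons T p d : tsub T (rcons p d) = tchild d (tsub T p).
Proof. by rewrite -cats1 tsub_cat; case: (tsub T p). Qed.

Lemma tvert_node T p : tvert T p = (tsub T p != Leaf).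
Proof. by rewrite -[p]cats0 -tvert_tsub cats0; case: (tsub T p). Qed.

Lemma cat_cancel (a u v : seq bool) : a ++ u = a ++ v -> u = v.
Proof. by move/(f_equal (drop (size a))); rewrite !drop_size_cat. Qed.

Lemma canc3 (t x u v : seq bool) b : t ++ x ++ b :: u = t ++ x ++ b :: v -> u = v.
Proof. by rewrite !catA => /cat_cancel [] . Qed.

Lemma dropcons (a s : seq bool) b : drop (size a).+1 (a ++ b :: s) = s.
Proof. by rewrite -cat_rcons drop_size_cat // size_rcons. Qed.

Definition occ S T t := forall v, pvert S v -> tvert T (t ++ v).

Lemma key1 S x X P T : all_contiguous S -> psub S x = Some X -> child true X = None ->
  contains T (attach_right_nc S x P) <->
  exists t, occ S T t /\ contains (tsub T (t ++ rcons x true)) P.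
Proof.
move=> HC HS HX; set Q := attach_right_nc S x P.
have Hx : pvert S x by rewrite /pvert HS.
have HSv : forall v, pvert S v -> pvert Q v.
  by move=> v Hv; apply/(@Q4 S x X P _ HS HX) => //; apply: (noSright HS HX).
split.
- move=> /contains_iff [f [Hv [Hi He]]].
  have R1 : forall v, pvert S v -> f v = f [::] ++ v.
    elim/last_ind => [|v d IH] H; first by rewrite cats0.
    have [c Ec] : exists c, etype S v d = Some c.
      by move/pvert_rcons: H; case: (etype S v d) => [c|] // _; exists c.
    have Ect := contig_etype HC Ec; subst c.
    have := He v d true; rewrite /edge (@Q3 S x X P _ _ HS HX) ?Ec; last first.
      by apply: (noSright HS HX).
    by move=> /(_ erefl) ->; rewrite IH ?rcons_cat //; apply: pvert_rconsl H.
  set t := f [::].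
  have R2 : forall w, pvert P w -> exists s, f (x ++ true :: w) = t ++ x ++ true :: s.
    elim/last_ind => [|w d IH] H.
    + have := He x true false (@Q2 S x X P HS HX); rewrite /edge => -[s].
      by rewrite cats1 => ->; rewrite R1 // -catA; exists s.
    + have [c Ec] : exists c, etype P w d = Some c.
        by move/pvert_rcons: H; case: (etype P w d) => [c|] // _; exists c.
      have [s Es] := IH (pvert_rconsl H).
      have := He (x ++ true :: w) d c; rewrite (@Q1 S x X P _ _ HS HX) Ec => /(_ erefl).
      rewrite /edge -rcons_cons -rcons_cat Es; case: c Ec => Ec.
      * by move=> ->; exists (rcons s d); rewrite !rcons_cat rcons_cons.
      * by move=> [s' ->]; exists (s ++ d :: s'); rewrite -!catA.
  pose g w := drop (size (t ++ x)).+1 (f (x ++ true :: w)).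
  have Hg : forall w, pvert P w -> f (x ++ true :: w) = t ++ x ++ true :: g w.
    by move=> w /R2 [s Es]; rewrite /g Es catA dropcons -catA.
  exists t; split.
  + by move=> v Hv'; rewrite -R1 //; apply: Hv; apply: HSv.
  + apply/contains_iff; exists g; split; [|split].
    * move=> w Hw; rewrite tvert_tsub -catA rcons_catx -Hg //; apply: Hv.
      by apply/(@Q5 S x X P _ HS HX).
    * move=> u v Hu Hv2 E.
      have : f (x ++ true :: u) = f (x ++ true :: v) by rewrite !Hg // E.
      move/Hi; rewrite !(@Q5 S x X P _ HS HX) => /(_ Hu Hv2).
      by move/cat_cancel => [].
    * move=> w d c E.
      have Hw := etype_vert E.
      have Hwd : pvert P (rcons w d) by apply/pvert_rcons; rewrite E.
      have := He (x ++ true :: w) d c; rewrite (@Q1 S x X P _ _ HS HX) E => /(_ erefl).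
      rewrite /edge rcons_cat rcons_cons !Hg //; case: c E => E.
      - by rewrite !rcons_cat rcons_cons => /canc3 ->.
      - by move=> [s]; rewrite -!catA /= => /canc3 ->; exists s.
- move=> [t [Ho /contains_iff [g [Hv [Hi He]]]]].
  pose f v := if prefix (rcons x true) v then t ++ x ++ true :: g (drop (size x).+1 v)
              else t ++ v.
  have Hf1 : forall w, f (x ++ true :: w) = t ++ x ++ true :: g w.
    by move=> w; rewrite /f -rcons_catx prefix_prefix rcons_catx dropcons.
  have Hf2 : forall v, ~~ prefix (rcons x true) v -> f v = t ++ v.
    by move=> v H; rewrite /f (negbTE H).
  apply/contains_iff; exists f; split; [|split].
  + move=> v /(Qcases HS HX) [[Hs Hn]|[w [-> Hw]]].
    * by rewrite Hf2 //; apply: Ho.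
    * by rewrite Hf1; have := Hv w Hw; rewrite tvert_tsub -catA rcons_catx.
  + move=> u v Hu Hv'.
    case/(Qcases HS HX): Hu => [[Hs Hn]|[w [-> Hw]]];
      case/(Qcases HS HX): Hv' => [[Hs' Hn']|[w' [-> Hw']]].
    * by rewrite !Hf2 // => /cat_cancel.
    * rewrite (Hf2 u) // Hf1 => /cat_cancel E.
      by move: Hn; rewrite E -rcons_catx prefix_prefix.
    * rewrite (Hf2 v) // Hf1 => /esym /cat_cancel E.
      by move: Hn'; rewrite E -rcons_catx prefix_prefix.
    * by rewrite !Hf1 => /canc3 /Hi -> //.
  + move=> v d c E.
    case Hp: (prefix (rcons x true) v).
    * move/prefixP: Hp => [w Ev]; rewrite rcons_catx in Ev; subst v.
      rewrite (@Q1 S x X P _ _ HS HX) in E.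
      have := He w d c E; rewrite /edge rcons_cat rcons_cons !Hf1.
      case: c E => E.
      - by move=> ->; rewrite !rcons_cat rcons_cons.
      - by move=> [s ->]; exists s; rewrite -!catA.
    * case Hq: (prefix (rcons x true) (rcons v d)).
      - have [H1|H2] := prefix_rcons_split Hq; first by rewrite H1 in Hp.
        move/eqP: H2; rewrite eqseq_rcons => /andP[/eqP Exv /eqP Ed]; subst v d.
        rewrite (@Q2 S x X P HS HX) in E; case: E => <-.
        rewrite /edge -cats1 Hf1 Hf2 ?Hp //; exists (g [::]); by rewrite -catA.
      - rewrite (@Q3 S x X P _ _ HS HX) ?Hq // in E.
        have Ect := contig_etype HC E; subst c.
        by rewrite /edge !Hf2 ?Hp ?Hq // rcons_cat.
Qed.

Definition pb (A : Prop) : bool := if excluded_middle_informative A then true else false.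

Lemma pbP (A : Prop) : pb A = true <-> A.
Proof. by rewrite /pb; case: excluded_middle_informative. Qed.

Lemma pbF (A : Prop) : pb A = false <-> ~ A.
Proof. by rewrite /pb; case: excluded_middle_informative. Qed.

Lemma pb_iff (A B : Prop) : (A <-> B) -> pb A = pb B.
Proof.
rewrite /pb => H; case: (excluded_middle_informative A); case: (excluded_middle_informative B) => //.
- by move=> p q; exfalso; apply: p; apply/H.
- by move=> p q; exfalso; apply: q; apply/H.
Qed.

Definition Yp S x T y := exists t, y = t ++ x /\ occ S T t.

Fixpoint go S x (phi : btree -> btree) T U p {struct U} : btree :=
  match U with
  | Leaf => Leaf
  | Node l r => Node (go S x phi T l (rcons p false))
      (if pb (Yp S x T p) then phi r else go S x phi T r (rcons p true))
  end.

Definition Psi S x phi T := go S x phi T T [::].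

Definition visited S x T p := forall y s, p = y ++ true :: s -> ~ Yp S x T y.

Lemma visited_nil S x T : visited S x T [::].
Proof. by move=> [|? ?] s. Qed.

Lemma visited_rcons S x T q d :
  visited S x T (rcons q d) <-> visited S x T q /\ (d = true -> ~ Yp S x T q).
Proof.
split.
- move=> H; split.
  + by move=> y s E; apply: (H y (rcons s d)); rewrite E rcons_cat rcons_cons.
  + by move=> Ed; subst d; apply: (H q [::]); rewrite cats1.
- move=> [H1 H2] y s; case/lastP: s => [|s e] E.
  + move/eqP: E; rewrite cats1 eqseq_rcons => /andP[/eqP Eq /eqP Ed].
    by rewrite -Eq; apply: H2.
  + move/eqP: E; rewrite -rcons_cons -rcons_cat eqseq_rcons => /andP[/eqP E _].
    exact: H1 E.
Qed.

Lemma Vmin S x T q : ~ visited S x T q ->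
  exists y s, [/\ visited S x T y, Yp S x T y & q = y ++ true :: s].
Proof.
elim/last_ind: q => [|q d IH] H; first by case: H; apply: visited_nil.
case: (excluded_middle_informative (visited S x T q)) => Vq.
- case: (excluded_middle_informative (Yp S x T q)) => Yq.
  + case: d H => H.
    * by exists q, [::]; split => //; rewrite cats1.
    * by case: H; apply/visited_rcons; split.
  + by case: H; apply/visited_rcons; split.
- have [y [s [Vy Yy E]]] := IH Vq.
  by exists y, (rcons s d); split => //; rewrite E rcons_cat rcons_cons.
Qed.

Lemma go_leaf S x phi T U p : (go S x phi T U p == Leaf) = (U == Leaf).
Proof. by case: U. Qed.

Lemma go_size S x phi T U p : (forall R, bsize (phi R) = bsize R) ->
  bsize (go S x phi T U p) = bsize U.
Proof.
move=> Hs; elim: U p => [|l IHl r IHr] p //=.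
by rewrite IHl; case: pb; rewrite ?Hs ?IHr.
Qed.

Lemma Psi_sub S x phi T p : visited S x T p -> tsub (Psi S x phi T) p = go S x phi T (tsub T p) p.
Proof.
elim/last_ind: p => [|p d IH] //.
move/visited_rcons => [Vp Hd].
rewrite !tsub_rcons IH //; case: (tsub T p) => [|l r] //=.
case: d Hd => Hd //=.
by have := Hd erefl; move/pbF => ->.
Qed.

Lemma Psi_vert S x phi T q : visited S x T q -> tvert (Psi S x phi T) q = tvert T q.
Proof. by move=> V; rewrite !tvert_node Psi_sub // go_leaf. Qed.

Lemma Yp_vert S x T y : pvert S x -> Yp S x T y -> tvert T y.
Proof. by move=> Hx [t [-> O]]; apply: O. Qed.

Lemma Psi_rep S x phi T y : pvert S x -> visited S x T y -> Yp S x T y ->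
  tsub (Psi S x phi T) (rcons y true) = phi (tsub T (rcons y true)).
Proof.
move=> Hx V Y; rewrite !tsub_rcons Psi_sub //.
have := Yp_vert Hx Y; rewrite tvert_node; case: (tsub T y) => [|l r] //= _.
by move/pbP: Y => ->.
Qed.

Lemma size0_leaf U : (bsize U == 0) = (U == Leaf).
Proof. by case: U. Qed.

Lemma Psi_rep_vert S x phi T y : (forall R, bsize (phi R) = bsize R) ->
  pvert S x -> visited S x T y -> Yp S x T y ->
  tvert (Psi S x phi T) (rcons y true) = tvert T (rcons y true).
Proof.
move=> Hs Hx V Y; rewrite !tvert_node Psi_rep //.
by rewrite -!size0_leaf Hs.
Qed.

Lemma cat_split (a b c d : seq bool) : a ++ b = c ++ d ->
  (exists m, c = a ++ m /\ b = m ++ d) \/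
  (exists m0 m, a = c ++ m0 :: m /\ d = m0 :: m ++ b).
Proof.
elim: a c => [|a0 a IH] c /=; first by move=> ->; left; exists c.
case: c => [|c0 c] /=.
- by move=> <-; right; exists a0, a.
- move=> [<-] /IH [[m [-> ->]]|[m0 [m [-> ->]]]].
  + by left; exists m.
  + by right; exists m0, m.
Qed.

Definition rightcond S x := forall u V, psub S (rcons u true) = Some V ->
     (child false V = None /\ child true V = None) \/
     (exists s, x = rcons u true ++ s).

Lemma crit S x X phi T p : psub S x = Some X -> child true X = None ->
  rightcond S x -> (forall R, bsize (phi R) = bsize R) ->
  visited S x T p -> (Yp S x (Psi S x phi T) p <-> Yp S x T p).
Proof.
move=> HS HX H3 Hs Vp.
have Hx : pvert S x by rewrite /pvert HS.
suff E : forall t, t ++ x = p -> forall v, pvert S v ->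
    tvert (Psi S x phi T) (t ++ v) = tvert T (t ++ v).
  split=> -[t [Et O]]; exists t; split => // v Hv.
  + by rewrite -E // ?O.
  + by rewrite E // ?O.
move=> t Et v Hv.
case: (excluded_middle_informative (visited S x T (t ++ v))) => Vtv.
  exact: Psi_vert.
have [y [s [Vy Yy Ey]]] := Vmin Vtv.
case: (cat_split Ey) => [[m [Ey' Ev]]|[m0 [m [Et' Em]]]].
- have Hm : pvert S (rcons m true) by move: Hv; rewrite Ev -rcons_catx; apply: pvert_cat.
  case EV: (psub S (rcons m true)) Hm => [V|] // _.
  case: (H3 _ _ EV) => [[Hl Hr]|[s' Ex]].
  + case: s Ev Ey => [|s0 s] Ev Ey.
    * by rewrite Ey cats1; apply: Psi_rep_vert.
    * exfalso; move: Hv; rewrite Ev -rcons_catx -cat_rcons => /pvert_cat.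
      by rewrite pvert_rcons /etype EV; clear Ev Ey; case: s0; rewrite ?Hl ?Hr.
  + exfalso; apply: (Vp y s') Yy.
    by rewrite -Et Ex Ey' -catA rcons_catx.
- exfalso; move: Em => [Em0 _]; subst m0.
  by apply: (Vp y (m ++ x)) Yy; rewrite -Et Et' -catA.
Qed.

Lemma Psi_inv S x X phi phi' T : psub S x = Some X -> child true X = None ->
  rightcond S x -> (forall R, bsize (phi R) = bsize R) ->
  (forall R, phi' (phi R) = R) ->
  Psi S x phi' (Psi S x phi T) = T.
Proof.
move=> HS HX H3 Hs Hinv; set T' := Psi S x phi T.
suff G : forall U p, visited S x T p -> tsub T p = U -> go S x phi' T' (tsub T' p) p = U.
  by apply: (G T [::]) => //; apply: visited_nil.
elim=> [|l IHl r IHr] p Vp E; first by rewrite /T' Psi_sub // E.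
rewrite /T' Psi_sub // E /= -/T'.
rewrite (pb_iff (@crit S x X phi T p HS HX H3 Hs Vp)).
have Vl : visited S x T (rcons p false) by apply/visited_rcons; split.
have El : tsub T (rcons p false) = l by rewrite tsub_rcons E.
congr Node.
- by rewrite -[RHS](IHl _ Vl El) /T' (Psi_sub phi Vl) El.
- case Ep: (pb (Yp S x T p)); first by rewrite Hinv.
  have Vr : visited S x T (rcons p true).
    by apply/visited_rcons; split => // _; apply/pbF.
  have Er : tsub T (rcons p true) = r by rewrite tsub_rcons E.
  by rewrite -[RHS](IHr _ Vr Er) /T' (Psi_sub phi Vr) Er.
Qed.

Lemma contains_mono T q P : contains (tsub T q) P -> contains T P.
Proof.
move=> [f [H1 [H2 H3]]]; exists (fun v => q ++ f v); split; [|split].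
- by move=> v Hv; rewrite -tvert_tsub; apply: H1.
- by move=> u v Hu Hv /cat_cancel; apply: H2.
- move=> v d c R Q E1 E2; have := H3 v d c R Q E1 E2.
  clear E2; case: c => [->|[s ->]]; first by rewrite rcons_cat.
  by exists s; rewrite catA.
Qed.

Lemma main_dir S x X P P' phi T : all_contiguous S ->
  psub S x = Some X -> child true X = None ->
  rightcond S x -> (forall R, bsize (phi R) = bsize R) ->
  (forall R, contains R P -> contains (phi R) P') ->
  contains T (attach_right_nc S x P) -> contains (Psi S x phi T) (attach_right_nc S x P').
Proof.
move=> HC HS HX H3 Hs Hc.
have Hx : pvert S x by rewrite /pvert HS.
move/(@key1 S x X P T HC HS HX) => [t [Ot Ct]].
have Yt : Yp S x T (t ++ x) by exists t.
have [y0 [V0 Y0 C0]] : exists y0, [/\ visited S x T y0, Yp S x T y0 &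
     contains (tsub T (rcons y0 true)) P].
  case: (excluded_middle_informative (visited S x T (t ++ x))) => V.
  + by exists (t ++ x); split => //; rewrite rcons_cat.
  + have [y [s [Vy Yy E]]] := Vmin V.
    exists y; split => //.
    apply: (@contains_mono _ (rcons s true)); rewrite -tsub_cat.
    by move: Ct; rewrite -rcons_cat E rcons_cat rcons_cons -rcons_catx.
have := Psi_rep phi Hx V0 Y0 => Erep.
have := (@crit S x X phi T y0 HS HX H3 Hs V0).2 Y0 => -[t0 [Et0 Ot0]].
apply/(@key1 S x X P' (Psi S x phi T) HC HS HX); exists t0; split => //.
by rewrite -rcons_cat -Et0 Erep; apply: Hc.
Qed.

Lemma containsbP T P : containsb T P = true <-> contains T P.
Proof. by rewrite /containsb; case: excluded_middle_informative. Qed.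

Theorem lemma17 (S : pat) (x : seq bool) (P P' : pat) :
  all_contiguous S ->
  (exists X, psub S x = Some X /\ child true X = None) ->
  (forall u V, psub S (rcons u true) = Some V ->
     (child false V = None /\ child true V = None) \/
     (exists s, x = rcons u true ++ s)) ->
  psize P = psize P' ->
  wilf_equiv P P' ->
  wilf_equiv (attach_right_nc S x P) (attach_right_nc S x P').
Proof.
move=> HC [X [HS HX]] H3 _ W n.
have W' : wilf_equiv P' P by move=> m; rewrite W.
set phi1 := phi P P'; set phi2 := phi P' P.
have Hs1 : forall R, bsize (phi1 R) = bsize R by move=> R; case: (phi_spec W R).
have Hs2 : forall R, bsize (phi2 R) = bsize R by move=> R; case: (phi_spec W' R).
have Hi1 : forall R, phi2 (phi1 R) = R by move=> R; case: (phi_spec W R).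
have Hi2 : forall R, phi1 (phi2 R) = R by move=> R; case: (phi_spec W' R).
have Hc1 : forall R, contains R P -> contains (phi1 R) P'.
  by move=> R /containsbP HR; apply/containsbP; case: (phi_spec W R) => _ -> _.
have Hc2 : forall R, contains R P' -> contains (phi2 R) P.
  by move=> R /containsbP HR; apply/containsbP; case: (phi_spec W' R) => _ -> _.
set Psi1 := Psi S x phi1; set Psi2 := Psi S x phi2.
have I1 : forall T, Psi2 (Psi1 T) = T by move=> T; apply: (@Psi_inv S x X _ _ T HS HX).
have I2 : forall T, Psi1 (Psi2 T) = T by move=> T; apply: (@Psi_inv S x X _ _ T HS HX).
have Sz : forall T, bsize (Psi1 T) = bsize T by move=> T; apply: go_size.
have CQ : forall T, containsb (Psi1 T) (attach_right_nc S x P') =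
                    containsb T (attach_right_nc S x P).
  move=> T; apply/idP/idP => /containsbP H; apply/containsbP.
  - by rewrite -[T]I1; apply: (@main_dir S x X P' P phi2 _ HC HS HX H3 Hs2 Hc2).
  - exact: (@main_dir S x X P P' phi1 _ HC HS HX H3 Hs1 Hc1).
have [Tu Tm] := trees_spec n.
have Hperm : perm_eq (map Psi1 (trees n)) (trees n).
  apply: uniq_perm => //; first by rewrite map_inj_uniq //; apply: (can_inj I1).
  move=> T; apply/mapP/idP.
  - by move=> [U HU ->]; rewrite Tm Sz -Tm.
  - move=> HT; exists (Psi2 T); last by rewrite I2.
    by rewrite Tm -(Sz (Psi2 T)) I2 -Tm.
rewrite /num_avoiders -[in RHS](permP Hperm) count_map.
by apply: eq_count => T /=; rewrite CQ.
Qed.
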